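(* Let $k$ be a field and $\mathsf{E}$ a locally finite $k$-linear category. Then the comodule inclusion functor $\Upsilon_\mathsf{E}$ from the category of left $\mathcal{C}_\mathsf{E}$-comodules to the category of left $\mathsf{E}$-modules is exact and fully faithful.
   Context: A small $k$-linear category $\mathsf{E}$ has $k$-vector spaces $\operatorname{Hom}_\mathsf{E}(x,y)$, $k$-bilinear associative composition and identities, with $\mathrm{id}_x\neq0$ for all $x$. A left $\mathsf{E}$-module is a $k$-linear functor $\mathsf{E}\to k\text{-Vect}$; morphisms are natural transformations. Write $x\preceq y$ if there are $n\ge1$ and objects $x=z_0,\dots,z_n=y$ with $\operatorname{Hom}_\mathsf{E}(z_{i-1},z_i)\neq0$ for all $i$. $\mathsf{E}$ is locally finite if all $\operatorname{Hom}_\mathsf{E}(x,y)$ are finite-dimensional and every set $\{z:x\preceq z\preceq y\}$ is finite. $\mathcal{C}_\mathsf{E}=\bigoplus_{x,y}\mathcal{C}^{x,y}$, $\mathcal{C}^{x,y}=\operatorname{Hom}_\mathsf{E}(x,y)^*$; counit zero on $\mathcal{C}^{x,y}$ for $x\ne y$ and evaluation at $\mathrm{id}_x$ on $\mathcal{C}^{x,x}$; comultiplication $\mathcal{C}^{x,y}\to\bigoplus_z\mathcal{C}^{x,z}\otimes\mathcal{C}^{z,y}$ with components dual to composition $g\otimes h\mapsto hg$. For a left $\mathcal{C}_\mathsf{E}$-comodule $(\mathcal{M},\nu)$ and $\varphi\in\mathcal{C}_\mathsf{E}^*$ set $\varphi\cdot m=(\varphi\otimes\mathrm{id})\nu(m)$.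 With $e_x$ the functional equal to evaluation at $\mathrm{id}_x$ on $\mathcal{C}^{x,x}$ and zero elsewhere and $\mathrm{ev}_f$ (for $f\in\operatorname{Hom}_\mathsf{E}(x,y)$) equal to evaluation at $f$ on $\mathcal{C}^{x,y}$ and zero elsewhere, $\Upsilon_\mathsf{E}(\mathcal{M})(x)=e_x\cdot\mathcal{M}$ (and $\mathcal{M}=\bigoplus_xe_x\cdot\mathcal{M}$), $f$ acting by $m\mapsto\mathrm{ev}_f\cdot m$; on morphisms $\Upsilon_\mathsf{E}$ takes restrictions. *)

(* Defs.v *)
From HB Require Import structures.
From Stdlib Require List.
From mathcomp Require Import all_boot all_algebra.
Set Implicit Arguments. Unset Strict Implicit. Unset Printing Implicit Defensive.
Import GRing.Theory.
Local Open Scope ring_scope.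

Record linCat (k : fieldType) := LinCat {
  Ob : Type;
  Hom : Ob -> Ob -> lmodType k;
  comp : forall x y z : Ob, Hom y z -> Hom x y -> Hom x z;
  idm : forall x : Ob, Hom x x;
  comp_linl : forall x y z (f : Hom x y) (a : k) (g1 g2 : Hom y z),
      comp (a *: g1 + g2) f = a *: comp g1 f + comp g2 f;
  comp_linr : forall x y z (g : Hom y z) (a : k) (f1 f2 : Hom x y),
      comp g (a *: f1 + f2) = a *: comp g f1 + comp g f2;
  compA : forall w x y z (h : Hom y z) (g : Hom x y) (f : Hom w x),
      comp h (comp g f) = comp (comp h g) f;
  comp1l : forall x y (f : Hom x y), comp (idm y) f = f;
  comp1r : forall x y (f : Hom x y), comp f (idm x) = f;
  idm_neq0 : forall x, idm x != 0
}.
Arguments comp {_ _ _ _ _}.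
Arguments idm {_ _}.
Arguments Hom {k} l.

Section Defs.
Variable k : fieldType.
Variable E : linCat k.

Definition nzHom (x y : Ob E) : Prop := exists f : Hom E x y, f != 0.

Inductive precE (x : Ob E) : Ob E -> Prop :=
  | precE1 y : nzHom x y -> precE x y
  | precES y z : precE x y -> nzHom y z -> precE x z.

Definition findim (V : lmodType k) : Prop :=
  exists s : seq V, forall v : V,
    exists c : 'I_(size s) -> k, v = \sum_(i < size s) c i *: s`_i.

Definition locally_finite : Prop :=
  (forall x y : Ob E, findim (Hom E x y)) /\
  (forall x y : Ob E, exists s : seq (Ob E),
      forall z, precE x z -> precE z y -> List.In z s).

(* Left C_E-comodules, with the coaction nu encoded through its components
   act f m := (ev_f (x) id) nu(m) for f : Hom x y
   (C^{x,y} (x) M = Hom(x,y)^* (x) M ~ Hom_k(Hom(x,y), M) as Hom(x,y) is f.d.). *)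
Record comodule := Comodule {
  cm_car : lmodType k;
  cm_act : forall x y : Ob E, Hom E x y -> cm_car -> cm_car;
  cm_act_linl : forall x y (a : k) (f g : Hom E x y) (m : cm_car),
      cm_act (a *: f + g) m = a *: cm_act f m + cm_act g m;
  cm_act_linr : forall x y (f : Hom E x y) (a : k) (m n : cm_car),
      cm_act f (a *: m + n) = a *: cm_act f m + cm_act f n;
  (* nu(m) lies in the direct sum: finitely many nonzero components *)
  cm_fin : forall m : cm_car, exists s : seq (Ob E * Ob E),
      forall x y (f : Hom E x y), ~ List.In (x, y) s -> cm_act f m = 0;
  (* counit: (eps (x) id) nu = id *)
  cm_counit : forall m : cm_car, exists s : seq (Ob E),
      [/\ List.NoDup s,
          (forall x, ~ List.In x s -> cm_act (idm x) m = 0) &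
          m = \sum_(x <- s) cm_act (idm x) m];
  (* coassociativity (Delta (x) id) nu = (id (x) nu) nu, componentwise *)
  cm_coassoc : forall x y z (f : Hom E x y) (g : Hom E y z) (m : cm_car),
      cm_act g (cm_act f m) = cm_act (comp g f) m;
  cm_coassoc0 : forall a b c d (f : Hom E a b) (g : Hom E c d) (m : cm_car),
      b <> c -> cm_act g (cm_act f m) = 0
}.

Definition comod_mor (M N : comodule) (t : {linear cm_car M -> cm_car N}) : Prop :=
  forall x y (f : Hom E x y) (m : cm_car M), t (cm_act f m) = cm_act f (t m).

Record Emodule := Emod {
  md_car : Ob E -> lmodType k;
  md_act : forall x y : Ob E, Hom E x y -> md_car x -> md_car y;
  md_linl : forall x y (a : k) (f g : Hom E x y) (v : md_car x),
      md_act (a *: f + g) v = a *: md_act f v + md_act g v;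
  md_linr : forall x y (f : Hom E x y) (a : k) (v w : md_car x),
      md_act f (a *: v + w) = a *: md_act f v + md_act f w;
  md_id : forall x (v : md_car x), md_act (idm x) v = v;
  md_comp : forall x y z (f : Hom E x y) (g : Hom E y z) (v : md_car x),
      md_act (comp g f) v = md_act g (md_act f v)
}.

Definition is_nat (F G : Emodule) (eta : forall x, md_car F x -> md_car G x) : Prop :=
  (forall x (a : k) (v w : md_car F x), eta x (a *: v + w) = a *: eta x v + eta x w) /\
  (forall x y (f : Hom E x y) (v : md_car F x), eta y (md_act f v) = md_act f (eta x v)).

End Defs.

Section U.
Variables (k : fieldType) (E : linCat k).
Section UM.
Variable M : comodule E.

Lemma cm_act0r x y (f : Hom E x y) : cm_act f (0 : cm_car M) = 0.
Proof.
have H := cm_act_linr f 1 (0 : cm_car M) 0.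
rewrite scale1r addr0 scale1r in H.
rewrite -{1}[cm_act f 0]addr0 in H.
have H2 := addrI _ H. by rewrite -H2.
Qed.

Definition fixE (x : Ob E) : {pred cm_car M} := fun m => cm_act (idm x) m == m.

Lemma fixE_closed x : GRing.submod_closed (fixE x).
Proof.
split; first by rewrite unfold_in /fixE cm_act0r.
move=> a u v; rewrite !unfold_in /fixE => /eqP hu /eqP hv.
by rewrite cm_act_linr hu hv.
Qed.

HB.instance Definition _ x := GRing.isSubmodClosed.Build k (cm_car M) (fixE x) (fixE_closed x).

Definition Ups_car x := {m : cm_car M | m \in fixE x}.
HB.instance Definition _ x := [isSub of Ups_car x for @sval _ _].
HB.instance Definition _ x := [Choice of Ups_car x by <:].
HB.instance Definition _ x := [SubChoice_isSubLmodule of Ups_car x by <:].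

Lemma Ups_act_in x y (f : Hom E x y) (v : Ups_car x) : cm_act f (val v) \in fixE y.
Proof. by rewrite unfold_in /fixE cm_coassoc comp1l. Qed.

Definition Ups_act x y (f : Hom E x y) (v : Ups_car x) : Ups_car y :=
  exist _ (cm_act f (val v)) (Ups_act_in f v).

Lemma Ups_linl x y (a : k) (f g : Hom E x y) (v : Ups_car x) :
  Ups_act (a *: f + g) v = a *: Ups_act f v + Ups_act g v.
Proof. by apply: val_inj; rewrite /= cm_act_linl. Qed.

Lemma Ups_linr x y (f : Hom E x y) (a : k) (v w : Ups_car x) :
  Ups_act f (a *: v + w) = a *: Ups_act f v + Ups_act f w.
Proof. by apply: val_inj; rewrite /= cm_act_linr. Qed.

Lemma Ups_id x (v : Ups_car x) : Ups_act (idm x) v = v.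
Proof. by apply: val_inj; rewrite /=; apply/eqP; have := valP v; rewrite unfold_in. Qed.

Lemma Ups_comp x y z (f : Hom E x y) (g : Hom E y z) (v : Ups_car x) :
  Ups_act (comp g f) v = Ups_act g (Ups_act f v).
Proof. by apply: val_inj; rewrite /= cm_coassoc. Qed.

Definition Ups : Emodule E := Emod Ups_linl Ups_linr Ups_id Ups_comp.
End UM.
Arguments fixE : clear implicits.
Arguments fixE M x.
Arguments Ups_car : clear implicits.
Arguments Ups_car M x.
Arguments Ups : clear implicits.
Arguments Ups M.

Lemma Ups_mor_in (M N : comodule E) (t : {linear cm_car M -> cm_car N})
  (Ht : comod_mor t) x (v : Ups_car M x) : t (val v) \in fixE N x.
Proof.
rewrite unfold_in /fixE -Ht; apply/eqP; congr (t _).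
by apply/eqP; have := valP v; rewrite unfold_in.
Qed.

Definition Ups_mor (M N : comodule E) (t : {linear cm_car M -> cm_car N})
  (Ht : comod_mor t) x (v : Ups_car M x) : Ups_car N x :=
  exist _ (t (val v)) (Ups_mor_in Ht v).

End U.
Arguments Ups_mor {k E M N t} Ht x v.

(* Main.v *)
From HB Require Import structures.
From Stdlib Require Import Classical ClassicalEpsilon.
From Stdlib Require List.
From mathcomp Require Import all_boot all_algebra.
Require Import Defs.
Set Implicit Arguments. Unset Strict Implicit. Unset Printing Implicit Defensive.
Import GRing.Theory.
Local Open Scope ring_scope.

Section H.
Variables (k : fieldType) (E : linCat k).

Section OneM.
Variable M : comodule E.

Lemma actD x y (f : Hom E x y) (m n : cm_car M) : cm_act f (m + n) = cm_act f m + cm_act f n.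
Proof. by have := cm_act_linr f 1 m n; rewrite !scale1r. Qed.
Lemma actZ x y (f : Hom E x y) a (m : cm_car M) : cm_act f (a *: m) = a *: cm_act f m.
Proof. by have := cm_act_linr f a m 0; rewrite !addr0 cm_act0r addr0. Qed.
Lemma actB x y (f : Hom E x y) (m n : cm_car M) : cm_act f (m - n) = cm_act f m - cm_act f n.
Proof. by rewrite actD -scaleN1r actZ scaleN1r. Qed.
Lemma act_sum x y (f : Hom E x y) (s : seq (Ob E)) (F : Ob E -> cm_car M) :
  cm_act f (\sum_(z <- s) F z) = \sum_(z <- s) cm_act f (F z).
Proof.
elim: s => [|z s IH]; first by rewrite !big_nil cm_act0r.
by rewrite !big_cons actD IH.
Qed.

Lemma fix_val x (v : Ups_car M x) : cm_act (idm x) (val v) = val v.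
Proof. by apply/eqP; have := valP v; rewrite unfold_in. Qed.

Lemma ortho x y (v : Ups_car M x) : x <> y -> cm_act (idm y) (val v) = 0.
Proof. by move=> hxy; rewrite -fix_val; apply: cm_coassoc0. Qed.

Lemma proj_in x (m : cm_car M) : cm_act (idm x) m \in @fixE _ _ M x.
Proof. by rewrite unfold_in /fixE cm_coassoc comp1l. Qed.

Definition proj x (m : cm_car M) : Ups_car M x := exist (fun m => m \in @fixE _ _ M x) _ (proj_in x m).

Lemma uniqM (n n' : cm_car M) :
  (forall x, cm_act (idm x) n = cm_act (idm x) n') -> n = n'.
Proof.
move=> H; apply/eqP; rewrite -subr_eq0; apply/eqP.
have [s [_ _ ->]] := cm_counit (n - n').
by apply: big1 => z _; rewrite actB H subrr.
Qed.

Lemma sum_ortho (g : forall x, Ups_car M x) (s : seq (Ob E)) y :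
  List.NoDup s ->
  \sum_(x <- s) cm_act (idm y) (val (g x)) =
  if excluded_middle_informative (List.In y s) then val (g y) else 0.
Proof.
elim: s => [|x s IH] hnd; first by rewrite big_nil; case: excluded_middle_informative.
inversion hnd as [|x' s' hx hs]; subst.
rewrite big_cons IH //.
case: (excluded_middle_informative (x = y)) => [exy|nxy].
  subst x; rewrite fix_val.
  destruct (excluded_middle_informative (List.In y s)) as [hin|hin]; first by exfalso; apply: hx.
  destruct (excluded_middle_informative (List.In y (y :: s))) as [h0|hin']; first by rewrite addr0.
  by exfalso; apply: hin'; left.
rewrite ortho // add0r.
destruct (excluded_middle_informative (List.In y s)) as [hin|hin];
destruct (excluded_middle_informative (List.In y (x :: s))) as [hin'|hin'] => //.
- by exfalso; apply: hin'; right.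
- by exfalso; case: hin' => // e; apply: nxy.
Qed.
End OneM.

Section Full.
Variables (M N : comodule E).
Variable eta : forall x : Ob E, md_car (Ups M) x -> md_car (Ups N) x.
Hypothesis Heta : is_nat eta.

Lemma eta0 x : @eta x 0 = 0.
Proof.
have := (proj1 Heta) x 1 0 0; rewrite scale1r addr0 scale1r.
by rewrite -{1}[@eta x 0]addr0 => /addrI <-.
Qed.

Lemma exist_t (m : cm_car M) : exists n : cm_car N,
  forall y, cm_act (idm y) n = val (@eta y (proj y m)).
Proof.
have [s [hnd hout _]] := cm_counit m.
exists (\sum_(x <- s) val (@eta x (proj x m))) => y.
rewrite act_sum (sum_ortho (fun x => @eta x (proj x m))) //.
case: excluded_middle_informative => // hin.
have -> : proj y m = 0 by apply: val_inj; rewrite /= hout.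
by rewrite eta0.
Qed.

Definition tfun (m : cm_car M) : cm_car N :=
  proj1_sig (constructive_indefinite_description _ (exist_t m)).

Lemma tfunP m y : cm_act (idm y) (tfun m) = val (@eta y (proj y m)).
Proof. by rewrite /tfun; case: constructive_indefinite_description. Qed.

Lemma tfun_lin : linear tfun.
Proof.
move=> a u v; apply: uniqM => y.
rewrite actD actZ !tfunP.
have -> : proj y (a *: u + v) = a *: proj y u + proj y v.
  by apply: val_inj; rewrite /= actD actZ.
by rewrite (proj1 Heta).
Qed.

HB.instance Definition _ := GRing.isLinear.Build k (cm_car M) (cm_car N) _ tfun tfun_lin.

Lemma tfun_mor : comod_mor tfun.
Proof.
move=> x y f m; apply: uniqM => z.
rewrite tfunP.
case: (excluded_middle_informative (y = z)) => [eyz|nyz].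
  subst z.
  rewrite cm_coassoc comp1l -[in RHS](comp1r f) -cm_coassoc tfunP.
  have -> : proj y (cm_act f m) = Ups_act f (proj x m).
    by apply: val_inj; rewrite /= cm_coassoc cm_coassoc comp1l comp1r.
  by rewrite (proj2 Heta).
have -> : proj z (cm_act f m) = 0 by apply: val_inj; rewrite /= cm_coassoc0.
by rewrite eta0 cm_coassoc0.
Qed.
End Full.
End H.

Theorem proposition2p5 (k : fieldType) (E : linCat k) (HE : locally_finite E) :
  (forall (M1 M2 M3 : comodule E)
          (a : {linear cm_car M1 -> cm_car M2}) (b : {linear cm_car M2 -> cm_car M3})
          (Ha : comod_mor a) (Hb : comod_mor b),
      (forall m2 : cm_car M2, (exists m1, a m1 = m2) <-> b m2 = 0) ->
      forall (x : Ob E) (v : Ups_car M2 x),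
        (exists u : Ups_car M1 x, Ups_mor Ha x u = v) <-> Ups_mor Hb x v = 0)
  /\
  (forall (M N : comodule E) (t t' : {linear cm_car M -> cm_car N})
          (Ht : comod_mor t) (Ht' : comod_mor t'),
      (forall (x : Ob E) (v : Ups_car M x), Ups_mor Ht x v = Ups_mor Ht' x v) ->
      forall m : cm_car M, t m = t' m)
  /\
  (forall (M N : comodule E)
          (eta : forall x : Ob E, md_car (Ups M) x -> md_car (Ups N) x),
      is_nat eta ->
      exists (t : {linear cm_car M -> cm_car N}) (Ht : comod_mor t),
        forall (x : Ob E) (v : Ups_car M x), Ups_mor Ht x v = eta x v).
Proof.
split; [|split].
- move=> M1 M2 M3 a b Ha Hb Hex x v; split.
    case=> u <-; apply: val_inj => /=.
    by apply/(Hex (a (val u))); exists (val u).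
  move=> hb.
  have hb' : b (val v) = 0 by have := congr1 val hb.
  have [m1 hm1] := proj2 (Hex (val v)) hb'.
  exists (proj x m1); apply: val_inj => /=.
  by rewrite Ha hm1 fix_val.
- move=> M N t t' Ht Ht' H m; apply: uniqM => x.
  rewrite -Ht -Ht'.
  by have := congr1 val (H x (proj x m)).
- move=> M N eta Heta.
  exists (tfun Heta), (tfun_mor Heta) => x v.
  apply: val_inj => /=.
  have e : tfun Heta (val v) = cm_act (idm x) (tfun Heta (val v)).
    by rewrite -(tfun_mor Heta) fix_val.
  rewrite e tfunP.
  congr (val (eta x _)); apply: val_inj => /=; exact: fix_val.
Qed.
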